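(* Let $\phi(z)\in\mathbb{Q}[z]$ be a polynomial of degree $d\geq 2$ with lead coefficient $a\in\mathbb{Q}^{\times}$. Let $e\geq 1$ be an integer, let $\gamma=\sqrt[e]{a}\in\overline{\mathbb{Q}}$ be an $e$-th root of $a$, and define $\psi(z)=\gamma\,\phi(\gamma^{-1}z)$. For each place $v\in M_{\mathbb{Q}}$ at which $\phi$ has bad reduction, let $c_v$ and $C_v$ be the following constants for $\psi$ viewed in $\mathbb{C}_v[z]$: writing $\psi(z)=b_d z^d+\cdots+b_0=b_d(z-\beta_1)\cdots(z-\beta_d)$ with $\beta_i\in\mathbb{C}_v$, $A=\max_i|\beta_i|_v$, $B=|b_d|_v^{-1/d}$, set $c_v=\max\{1,A,B\}$, $C_v=\max\{1,|b_0|_v,\ldots,|b_d|_v\}$ if $v$ is non-archimedean, and $c_v=\max\{1,A+B\}$, $C_v=\max\{1,|b_0|_v+\cdots+|b_d|_v\}$ if $v$ is archimedean. Then $$-\frac{1}{d^n}\tilde{c}(\phi,e)\leq \hat{h}_{\phi}(x)-\frac{1}{e\,d^n}h\Big(a\big(\phi^n(x)\big)^e\Big)\leq\frac{1}{d^n}\tilde{C}(\phi,e)$$ for all $x\in\mathbb{Q}$ and all integers $n\geq 0$, where $$\tilde{c}(\phi,e)=\frac{d}{d-1}\sum_{v\ \text{bad}}\log c_v,\qquad \tilde{C}(\phi,e)=\frac{1}{d-1}\sum_{v\ \text{bad}}\log C_v.$$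
   Context: $M_{\mathbb{Q}}=\{|\cdot|_\infty,|\cdot|_2,|\cdot|_3,|\cdot|_5,\ldots\}$ is the set of standard absolute values (places) of $\mathbb{Q}$, normalized so that the product formula holds. For $v\in M_{\mathbb{Q}}$, $\mathbb{C}_v$ is the completion of an algebraic closure of $\mathbb{Q}_v$, and $\overline{\mathbb{Q}}$ is regarded as a subfield of $\mathbb{C}_v$ via a fixed embedding. The height of $x=m/n\in\mathbb{Q}$ in lowest terms is $h(x)=\log\max\{|m|,|n|\}$. For $\phi\in\mathbb{Q}[z]$ of degree $d\ge2$, the canonical height is $\hat{h}_\phi(x)=\lim_{n\to\infty}d^{-n}h(\phi^n(x))$, where $\phi^n$ is the $n$-th iterate. A polynomial $\phi(z)=a_dz^d+\cdots+a_0$ of degree $d\geq 2$ has good reduction at $v$ if $v$ is non-archimedean, $|a_i|_v\leq 1$ for all $i$, and $|a_d|_v=1$; otherwise it has bad reduction at $v$ (in particular the archimedean place is always bad). *)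

(* Defs.v *)
From HB Require Import structures.
From mathcomp Require Import all_boot all_order all_algebra.
From mathcomp Require Import all_classical all_reals all_analysis.
Set Implicit Arguments. Unset Strict Implicit. Unset Printing Implicit Defensive.
Import Order.TTheory GRing.Theory Num.Theory numFieldNormedType.Exports.
Local Open Scope ring_scope.

Definition padic_abs (p : nat) (x : rat) : rat :=
  if x == 0 then 0
  else exprz (p%:R : rat)
         (Posz (logn p `|denq x|%N) - Posz (logn p `|numq x|%N)).

Definition arch_abs (x : rat) : rat := `|x|.

(* Plays the role of C_v (only absolute values of algebraic elements matter). *)
Record vclosure (R : realType) (absQ : rat -> rat) := VClosure {
  vc_field : closedFieldType;
  vc_abs : vc_field -> R;
  vc_abs_ge0 : forall x, 0 <= vc_abs x;
  vc_abs_eq0 : forall x, (vc_abs x == 0) = (x == 0);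
  vc_absM : forall x y, vc_abs (x * y) = vc_abs x * vc_abs y;
  vc_absD : forall x y, vc_abs (x + y) <= vc_abs x + vc_abs y;
  vc_absQ : forall q : rat, vc_abs (ratr q) = ratr (absQ q) }.

Definition pdeg (phi : {poly rat}) : nat := (size phi).-1.

Definition bad_at (p : nat) (phi : {poly rat}) : bool :=
  ~~ ((all (fun c => padic_abs p c <= 1) phi)
      && (padic_abs p (lead_coef phi) == 1)).

(* Every prime of bad reduction divides this number (denominators of the
   coefficients times the numerator of the lead coefficient). *)
Definition bad_bound (phi : {poly rat}) : nat :=
  ((\prod_(i < size phi) `|denq phi`_i|%N) * `|numq (lead_coef phi)|%N)%N.

Definition bad_primes (phi : {poly rat}) : seq nat :=
  [seq p <- primes (bad_bound phi) | bad_at p phi].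

Definition psi_poly (K : closedFieldType) (phi : {poly rat}) (g : K) : {poly K} :=
  g *: ((map_poly ratr phi) \Po (g^-1 *: 'X)).

Definition roots_seq (K : closedFieldType) (q : {poly K}) : seq K :=
  sval (closed_field_poly_normal q).

Section Constants.
Variables (R : realType) (absQ : rat -> rat) (Kv : vclosure R absQ).
Variables (phi : {poly rat}) (g : vc_field Kv).

Let psi := psi_poly phi g.
Let d := pdeg phi.
Let absv := @vc_abs R absQ Kv.

Definition cA : R := \big[Num.max/0]_(z <- roots_seq psi) absv z.
Definition cB : R := (absv psi`_d) `^ (- (d%:R)^-1).

Definition c_nonarch : R := Num.max 1 (Num.max cA cB).
Definition C_nonarch : R := Num.max 1 (\big[Num.max/0]_(i < d.+1) absv psi`_i).
Definition c_arch : R := Num.max 1 (cA + cB).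
Definition C_arch : R := Num.max 1 (\sum_(i < d.+1) absv psi`_i).
End Constants.

Definition height (R : realType) (x : rat) : R :=
  ln (Num.max (`|numq x|%:~R) (`|denq x|%:~R)).

Definition canonical_height (R : realType) (phi : {poly rat}) (x : rat) : R :=
  limn (fun n : nat => height R (iter n (fun y => phi.[y]) x)
                       / ((pdeg phi)%:R ^+ n)).

(* c~(phi,e) and C~(phi,e): the archimedean place is always bad. *)
Definition ctilde (R : realType) (phi : {poly rat})
  (Kinf : vclosure R arch_abs) (Kp : forall p : nat, vclosure R (padic_abs p))
  (ginf : vc_field Kinf) (gp : forall p, vc_field (Kp p)) : R :=
  (pdeg phi)%:R / ((pdeg phi)%:R - 1) *
  (ln (c_arch phi ginf) + \sum_(p <- bad_primes phi) ln (c_nonarch phi (gp p))).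

Definition Ctilde (R : realType) (phi : {poly rat})
  (Kinf : vclosure R arch_abs) (Kp : forall p : nat, vclosure R (padic_abs p))
  (ginf : vc_field Kinf) (gp : forall p, vc_field (Kp p)) : R :=
  1 / ((pdeg phi)%:R - 1) *
  (ln (C_arch phi ginf) + \sum_(p <- bad_primes phi) ln (C_nonarch phi (gp p))).

(* Main.v *)
Require Import Defs.
From HB Require Import structures.
From mathcomp Require Import all_boot all_order all_algebra.
From mathcomp Require Import all_classical all_reals all_analysis.
Import Order.TTheory GRing.Theory Num.Theory numFieldNormedType.Exports.
From mathcomp Require Import ring lra.
Set Implicit Arguments. Unset Strict Implicit.
Local Open Scope ring_scope.


Section Local.
Variables (R : realType) (absQ : rat -> rat) (K : vclosure R absQ).
Local Notation F := (vc_field K).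
Local Notation N := (@vc_abs R absQ K).

Lemma N0 : N 0 = 0.
Proof. by apply/eqP; rewrite vc_abs_eq0. Qed.

Lemma N1 : N 1 = 1.
Proof.
have h := @vc_absM R absQ K 1 1; rewrite mulr1 in h.
have nz : N 1 != 0 by rewrite vc_abs_eq0 oner_eq0.
by apply: (mulfI nz); rewrite -h mulr1.
Qed.

Lemma NX (x : F) n : N (x ^+ n) = N x ^+ n.
Proof. by elim: n => [|n IH]; rewrite ?expr0 ?N1 // !exprS vc_absM IH. Qed.

Lemma NN (x : F) : N (- x) = N x.
Proof.
have h : N (-1) ^+ 2 = 1 by rewrite -NX sqrrN expr1n N1.
have h1 : N (-1) = 1.
  by apply/eqP; rewrite -(@pexpr_eq1 _ _ 2) ?h ?vc_abs_ge0.
by rewrite -mulN1r vc_absM h1 mul1r.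
Qed.

Lemma NV (x : F) : x != 0 -> N (x ^-1) = (N x)^-1.
Proof.
move=> nz; have h := @vc_absM R absQ K x x^-1; rewrite mulfV // N1 in h.
have nzN : N x != 0 by rewrite vc_abs_eq0.
by apply: (mulfI nzN); rewrite -h mulfV.
Qed.

Lemma NB (x y : F) : N x - N y <= N (x - y).
Proof.
rewrite lerBlDr; have := @vc_absD R absQ K (x - y) y; by rewrite subrK.
Qed.

Lemma Nsum (I : Type) (r : seq I) (f : I -> F) :
  N (\sum_(i <- r) f i) <= \sum_(i <- r) N (f i).
Proof.
elim: r => [|a r IH]; first by rewrite !big_nil N0.
rewrite !big_cons; apply: le_trans (vc_absD _ _) _; exact: lerD.
Qed.

Lemma Nprod (I : Type) (r : seq I) (f : I -> F) :
  N (\prod_(i <- r) f i) = \prod_(i <- r) N (f i).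
Proof.
elim: r => [|a r IH]; first by rewrite !big_nil N1.
by rewrite !big_cons vc_absM IH.
Qed.

Lemma Nnat_le (hQ : forall n : nat, absQ n%:R <= 1) (n : nat) : N n%:R <= 1.
Proof.
by rewrite -(ratr_nat F) vc_absQ -(rmorph1 (@ratr R)) ler_rat.
Qed.

End Local.


Lemma bernoulli (R : realFieldType) (eps : R) n : 0 <= eps -> 1 + eps *+ n <= (1 + eps) ^+ n.
Proof.
move=> he; elim: n => [|n IH]; first by rewrite mulr0n expr0 addr0.
rewrite exprSr mulrSr.
have h0 : 0 <= eps *+ n by rewrite mulrn_wge0.
have := ler_wpM2r (x := 1 + eps) _ IH; rewrite (_ : 0 <= 1 + eps); last by lra.
move=> /(_ isT) H; apply: le_trans H; nra.
Qed.

Lemma pow_bound (R : realType) (t M : R) : 0 <= t -> 0 <= M ->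
  (forall n : nat, t ^+ n <= n.+1%:R * M ^+ n) -> t <= M.
Proof.
move=> ht hM H; rewrite leNgt; apply/negP => hMt.
have [M0|Mpos] := eqVneq M 0.
  have := H 1%N; rewrite M0 expr1 expr1 mulr0 => ht0; lra.
have Mp : 0 < M by rewrite lt_neqAle eq_sym Mpos hM.
set eps := t / M - 1.
have ep : 0 < eps by rewrite /eps subr_gt0 ltr_pdivlMr // mul1r.
have key : forall n : nat, (1 + eps) ^+ n <= n.+1%:R.
  move=> n; have := H n; rewrite /eps addrC subrK expr_div_n.
  by rewrite ler_pdivrMr ?exprn_gt0.
set k := Num.Def.archi_bound (3 / (eps ^+ 2)).
have hk : 3 / (eps ^+ 2) < k%:R by apply: archi_boundP; rewrite divr_ge0 // exprn_ge0 // ltW.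
have k1 := key (k + k)%N.
have b := @bernoulli R eps k (ltW ep).
have b2 : (1 + eps *+ k) ^+ 2 <= (1 + eps) ^+ (k + k).
  rewrite exprD -expr2; apply: lerXn2r => //; rewrite ?nnegrE //.
  - by rewrite addr_ge0 // mulrn_wge0 // ltW.
  - by rewrite exprn_ge0 // addr_ge0 // ltW.
have := le_trans b2 k1.
rewrite -mulr_natr -[(k + k).+1]addn1 !natrD.
have kpos : 0 <= (k%:R : R) by [].
have e2 : 0 < eps ^+ 2 by rewrite exprn_gt0.
move: hk; rewrite ltr_pdivrMr // => hk.
rewrite expr2 in hk; move=> h; nra.
Qed.

Section Ult.
Variables (R : realType) (absQ : rat -> rat) (K : vclosure R absQ).
Local Notation F := (vc_field K).
Local Notation N := (@vc_abs R absQ K).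
Hypothesis hQ : forall n : nat, absQ n%:R <= 1.

Lemma ultra (x y : F) : N (x + y) <= Num.max (N x) (N y).
Proof.
set M := Num.max (N x) (N y).
have hx : N x <= M by rewrite le_max lexx.
have hy : N y <= M by rewrite le_max lexx orbT.
apply: pow_bound; rewrite ?vc_abs_ge0 //.
  by apply: le_trans hx; apply: vc_abs_ge0.
move=> n; rewrite -NX exprDn; apply: le_trans (Nsum _ _) _.
rewrite big_ord_recl /=.
have Hi : forall i : 'I_n.+1, N (x ^+ (n - i) * y ^+ i *+ 'C(n, i)) <= M ^+ n.
  move=> i; rewrite -mulr_natr vc_absM.
  have := Nnat_le K hQ 'C(n, i) => hc.
  rewrite vc_absM !NX.
  have -> : M ^+ n = (M ^+ (n - i) * M ^+ i) * 1.
    by rewrite mulr1 -exprD subnK // -ltnS.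
  apply: ler_pM; rewrite ?vc_abs_ge0 ?mulr_ge0 ?exprn_ge0 ?vc_abs_ge0 //.
  by apply: ler_pM; rewrite ?exprn_ge0 ?vc_abs_ge0 //; apply: lerXn2r; rewrite ?nnegrE ?vc_abs_ge0 //; apply: le_trans hx; apply: vc_abs_ge0.
have := Hi ord0; rewrite /= => H0.
rewrite [in X in _ <= X]mulrS mulrDl mul1r; apply: lerD => //.
apply: le_trans (ler_sum _ (fun i _ => Hi (lift ord0 i))) _.
by rewrite sumr_const card_ord mulr_natl.
Qed.

Lemma ult_eq (a b : F) : N b < N a -> N (a + b) = N a.
Proof.
move=> hb; apply/eqP; rewrite eq_le; apply/andP; split.
  by apply: le_trans (ultra _ _) _; rewrite ge_max lexx ltW.
have := ultra (a + b) (- b); rewrite addrK NN.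
rewrite le_max => /orP [//|h]; by move: (lt_le_trans hb h); rewrite ltxx.
Qed.

Lemma ult_sum_le (I : eqType) (r : seq I) (f : I -> F) (X : R) : 0 <= X ->
  (forall i, i \in r -> N (f i) <= X) -> N (\sum_(i <- r) f i) <= X.
Proof.
move=> X0; elim: r => [|a r IH] H; first by rewrite big_nil N0.
rewrite big_cons; apply: le_trans (ultra _ _) _; rewrite ge_max H ?mem_head //=.
by apply: IH => i hi; apply: H; rewrite in_cons hi orbT.
Qed.
End Ult.


Section Poly.
Variables (R : realType) (absQ : rat -> rat) (K : vclosure R absQ).
Local Notation F := (vc_field K).
Local Notation N := (@vc_abs R absQ K).

Definition mx1 (t : R) := Num.max 1 t.

Lemma mx1_ge1 t : 1 <= mx1 t. Proof. by rewrite /mx1 le_max lexx. Qed.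
Lemma mx1_ge t : t <= mx1 t. Proof. by rewrite /mx1 le_max lexx orbT. Qed.
Lemma mx1_gt0 t : 0 < mx1 t. Proof. by apply: lt_le_trans (mx1_ge1 t); rewrite ltr01. Qed.

Lemma roots_eq (q : {poly F}) :
  q = lead_coef q *: \prod_(z <- roots_seq q) ('X - z%:P).
Proof. by rewrite /roots_seq; case: (closed_field_poly_normal q). Qed.

Lemma roots_size (q : {poly F}) d : size q = d.+1 -> size (roots_seq q) = d.
Proof.
move=> hs; have hl : lead_coef q != 0 by rewrite lead_coef_eq0 -size_poly_eq0 hs.
have h : size q = size (lead_coef q *: \prod_(z <- roots_seq q) ('X - z%:P)) by rewrite -roots_eq.
by move: h; rewrite size_scale // size_prod_XsubC hs; case.
Qed.

Lemma horner_roots (q : {poly F}) w :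
  q.[w] = lead_coef q * \prod_(z <- roots_seq q) (w - z).
Proof.
by rewrite {1}(roots_eq q) hornerZ horner_prod; congr (_ * _); apply: eq_bigr => z _; rewrite hornerXsubC.
Qed.

Lemma prod_const_seq (I : Type) (r : seq I) (k : R) : \prod_(i <- r) k = k ^+ size r.
Proof. by elim: r => [|a r IH]; rewrite ?big_nil ?expr0 // big_cons IH exprS. Qed.

Definition Bq (q : {poly F}) d : R := N q`_d `^ (- (d%:R)^-1).

Lemma Bq_ge0 q d : 0 <= Bq q d. Proof. exact: powR_ge0. Qed.

Lemma Bq_pow (q : {poly F}) d : (0 < d)%N -> q`_d != 0 -> Bq q d ^+ d * N q`_d = 1.
Proof.
move=> d0 nz; have Np : 0 < N q`_d by rewrite lt_neqAle vc_abs_ge0 andbT eq_sym vc_abs_eq0.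
rewrite /Bq -powR_mulrn ?powR_ge0 // -powRrM mulNr mulVf ?pnatr_eq0 -?lt0n //.
by rewrite powR_inv1 ?ltW // mulVf // gt_eqF.
Qed.

Definition Aq (q : {poly F}) : R := \big[Num.max/0]_(z <- roots_seq q) N z.

Lemma Aq_ge (q : {poly F}) z : z \in roots_seq q -> N z <= Aq q.
Proof. move=> hz; rewrite /Aq; exact: (Order.TotalTheory.le_bigmax_seq 0 z xpredT (fun z => N z) hz isT). Qed.

Lemma Aq_ge0 (q : {poly F}) : 0 <= Aq q.
Proof.
rewrite /Aq; elim: (roots_seq q) => [|a r IH]; rewrite ?big_nil ?big_cons //.
by rewrite le_max IH orbT.
Qed.

Lemma lower_gen (q : {poly F}) d (w : F) (A' c : R) :
  size q = d.+1 -> (0 < d)%N -> 0 <= A' -> 1 <= c -> A' + Bq q d <= c ->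
  (forall z, z \in roots_seq q -> c < N w -> N w - A' <= N (w - z)) ->
  mx1 (N w) ^+ d <= c ^+ d * mx1 (N q.[w]).
Proof.
move=> hs d0 hA hc hcB Hz.
have c0 : 0 <= c by lra.
have [hw|hw] := leP (N w) c.
  apply: le_trans (_ : c ^+ d <= _).
    by apply: lerXn2r; rewrite ?nnegrE ?(ltW (mx1_gt0 _)) // ge_max hc hw.
  by rewrite -{1}[c ^+ d]mulr1 ler_wpM2l ?exprn_ge0 ?mx1_ge1.
have -> : mx1 (N w) = N w by rewrite /mx1 max_r //; lra.
have hl : q`_d != 0 by rewrite -[d]/(d.+1.-1) -hs -lead_coefE lead_coef_eq0 -size_poly_eq0 hs.
have hB := Bq_pow d0 hl.
set B := Bq q d in hB hcB.
have B0 : 0 <= B := Bq_ge0 q d.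
have Nl0 : 0 <= N q`_d := vc_abs_ge0 _.
have step : N q`_d * (N w - A') ^+ d <= N q.[w].
  rewrite horner_roots lead_coefE hs /= vc_absM Nprod; apply: ler_wpM2l => //.
  rewrite -(roots_size hs) -prod_const_seq !big_seq; apply: ler_prod => z hz.
  apply/andP; split; last exact: Hz.
  rewrite subr_ge0; lra.
have key : B * N w <= c * (N w - A') by nra.
have : (B * N w) ^+ d <= (c * (N w - A')) ^+ d.
  by apply: lerXn2r => //; rewrite nnegrE; nra.
rewrite !exprMn => h2.
apply: le_trans (_ : c ^+ d * (N q`_d * (N w - A') ^+ d) <= _); last first.
  apply: ler_wpM2l; first by rewrite exprn_ge0.
  by apply: le_trans step (mx1_ge _).
have := ler_wpM2l Nl0 h2.
have e1 : N q`_d * (B ^+ d * N w ^+ d) = N w ^+ d.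
  by rewrite mulrA [N q`_d * _]mulrC hB mul1r.
have e2 : N q`_d * (c ^+ d * (N w - A') ^+ d) = c ^+ d * (N q`_d * (N w - A') ^+ d).
  by rewrite mulrCA.
by rewrite e1 e2.
Qed.

Lemma upper_arch (q : {poly F}) d (w : F) :
  size q = d.+1 ->
  mx1 (N q.[w]) <= mx1 (\sum_(i < d.+1) N q`_i) * mx1 (N w) ^+ d.
Proof.
move=> hs.
have m1 : 1 <= mx1 (N w) ^+ d by rewrite exprn_ege1 // mx1_ge1.
have S0 : 0 <= \sum_(i < d.+1) N q`_i by rewrite sumr_ge0 // => i _; apply: vc_abs_ge0.
rewrite [X in X <= _]/mx1 ge_max; apply/andP; split.
  by rewrite -[1 in X in X <= _]mulr1 ler_pM // ?ler01 // mx1_ge1.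
rewrite horner_coef hs; apply: le_trans (Nsum _ _) _.
apply: le_trans (_ : _ <= mx1 (N w) ^+ d * \sum_(i < d.+1) N q`_i) _; last first.
  by rewrite mulrC ler_wpM2r ?(le_trans ler01 m1) // mx1_ge.
rewrite mulr_sumr; apply: ler_sum => i _; rewrite vc_absM mulrC NX; apply: ler_wpM2r; first exact: vc_abs_ge0.
apply: le_trans (_ : mx1 (N w) ^+ i <= _).
  by apply: lerXn2r; rewrite ?nnegrE ?vc_abs_ge0 ?(ltW (mx1_gt0 _)) ?mx1_ge.
by apply: ler_weXn2l; [exact: mx1_ge1| rewrite -ltnS].
Qed.


Lemma lower_arch (q : {poly F}) d (w : F) :
  size q = d.+1 -> (0 < d)%N ->
  mx1 (N w) ^+ d <= (Num.max 1 (Aq q + Bq q d)) ^+ d * mx1 (N q.[w]).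
Proof.
move=> hs d0; apply: (lower_gen hs d0 (Aq_ge0 q)); rewrite ?le_max ?lexx ?orbT //.
move=> z hz _; apply: le_trans (NB _ _); by rewrite lerB // Aq_ge.
Qed.

Hypothesis hQ : forall n : nat, absQ n%:R <= 1.

Lemma lower_nonarch (q : {poly F}) d (w : F) :
  size q = d.+1 -> (0 < d)%N ->
  mx1 (N w) ^+ d <= (Num.max 1 (Num.max (Aq q) (Bq q d))) ^+ d * mx1 (N q.[w]).
Proof.
move=> hs d0; apply: (lower_gen hs d0 (lexx 0)); rewrite ?le_max ?lexx ?add0r //; first by rewrite (lexx (Bq q d)) !orbT.
move=> z hz hc; rewrite subr0.
have h : N (- z) < N w.
  rewrite NN; apply: le_lt_trans hc; apply: le_trans (Aq_ge hz) _.
  by rewrite le_max le_max lexx orbT.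
by rewrite (ult_eq hQ h).
Qed.

Lemma upper_nonarch (q : {poly F}) d (w : F) :
  size q = d.+1 ->
  mx1 (N q.[w]) <= mx1 (\big[Num.max/0]_(i < d.+1) N q`_i) * mx1 (N w) ^+ d.
Proof.
move=> hs; set M := \big[Num.max/0]_(i < d.+1) N q`_i.
have m1 : 1 <= mx1 (N w) ^+ d by rewrite exprn_ege1 // mx1_ge1.
have M0 : 0 <= M.
  by apply: le_trans (vc_abs_ge0 (q`_0)) _; exact: (le_bigmax 0 (fun i : 'I_d.+1 => N q`_i) ord0).
rewrite [X in X <= _]/mx1 ge_max; apply/andP; split.
  by rewrite -[1 in X in X <= _]mulr1 ler_pM // ?ler01 // mx1_ge1.
apply: le_trans (_ : _ <= M * mx1 (N w) ^+ d) _; last first.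
  by rewrite ler_wpM2r ?(le_trans ler01 m1) // mx1_ge.
rewrite horner_coef hs; apply: ult_sum_le => //; first by rewrite mulr_ge0 // (le_trans ler01 m1).
move=> i _; rewrite vc_absM NX; apply: ler_pM; rewrite ?vc_abs_ge0 ?exprn_ge0 ?vc_abs_ge0 //.
  exact: (le_bigmax 0 (fun i : 'I_d.+1 => N q`_i) i).
apply: le_trans (_ : mx1 (N w) ^+ i <= _).
  by apply: lerXn2r; rewrite ?nnegrE ?vc_abs_ge0 ?(ltW (mx1_gt0 _)) ?mx1_ge.
by apply: ler_weXn2l; [exact: mx1_ge1| rewrite -ltnS].
Qed.

Lemma good_eq (q : {poly F}) d (w : F) :
  size q = d.+1 -> (0 < d)%N -> (forall i, N q`_i <= 1) -> N q`_d = 1 ->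
  mx1 (N q.[w]) = mx1 (N w) ^+ d.
Proof.
move=> hs d0 hq hd.
have [hw|hw] := leP (N w) 1.
  have -> : mx1 (N w) = 1 by rewrite /mx1 max_l.
  rewrite expr1n /mx1 max_l //.
  rewrite horner_coef hs; apply: ult_sum_le => // i _.
  rewrite vc_absM NX -[1]mulr1 ler_pM ?vc_abs_ge0 ?exprn_ge0 ?vc_abs_ge0 //.
  by rewrite exprn_ile1 ?vc_abs_ge0.
have -> : mx1 (N w) = N w by rewrite /mx1 max_r // ltW.
have w0 : 0 <= N w by apply: le_trans (ltW hw); apply: ler01.
rewrite horner_coef hs big_ord_recr /= addrC.
have e1 : N (q`_d * w ^+ d) = N w ^+ d by rewrite vc_absM hd mul1r NX.
have h : N (\sum_(i < d) q`_i * w ^+ i) < N (q`_d * w ^+ d).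
  rewrite e1; apply: le_lt_trans (_ : N w ^+ d.-1 < _); last first.
    by rewrite -{2}(prednK d0) exprS ltr_pMl ?exprn_gt0 // (lt_trans ltr01).
  apply: ult_sum_le => //; first by rewrite exprn_ge0.
  move=> i _; rewrite vc_absM NX -[N w ^+ d.-1]mul1r ler_pM ?vc_abs_ge0 ?exprn_ge0 //.
  by apply: ler_weXn2l; [exact: ltW | rewrite -ltnS prednK].
rewrite (ult_eq hQ h) e1 /mx1 max_r //.
by rewrite exprn_ege1 // ltW.
Qed.

End Poly.


Section Rat.
Variable R : realType.

Lemma ln_prod_nat (I : eqType) (r : seq I) (f : I -> nat) :
  (forall i, i \in r -> (0 < f i)%N) ->
  ln (\prod_(i <- r) (f i)%:R : R) = \sum_(i <- r) ln ((f i)%:R : R).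
Proof.
elim: r => [|a r IH] hf; first by rewrite !big_nil ln1.
have hf' : forall i, i \in r -> (0 < f i)%N by move=> i hi; apply: hf; rewrite in_cons hi orbT.
rewrite !big_cons lnM ?IH // posrE ?ltr0n ?hf ?mem_head // big_seq prodr_gt0 // => i hi.
by rewrite ltr0n hf'.
Qed.

Lemma sum_logn (S : seq nat) (D : nat) : (0 < D)%N -> uniq S ->
  {subset primes D <= S} ->
  \sum_(p <- S) (logn p D)%:R * ln (p%:R : R) = ln (D%:R : R).
Proof.
move=> D0 uS sS.
rewrite (bigID (fun p => p \in primes D)) /= [X in _ + X]big1 ?addr0; last first.
  by move=> p hp; rewrite (_ : logn p D = 0%N) ?mul0r //; apply/eqP; rewrite -leqn0 leqNgt logn_gt0.
rewrite -big_filter (perm_big (primes D)); last first.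
  apply: uniq_perm; rewrite ?filter_uniq ?primes_uniq // => p.
  by rewrite mem_filter; case hp: (p \in primes D) => //=; exact: sS.
have -> : (D%:R : R) = ((\prod_(f <- prime_decomp D) f.1 ^ f.2)%N)%:R by rewrite -prod_prime_decomp.
rewrite prime_decompE big_map /= natr_prod.
rewrite ln_prod_nat; last first.
  move=> p; rewrite mem_primes => /and3P [pp _ _]; by rewrite expn_gt0 prime_gt0.
rewrite big_seq [RHS]big_seq; apply: eq_bigr => p; rewrite mem_primes => /and3P [pp _ _].
by rewrite natrX lnXn ?ltr0n ?prime_gt0 // mulr_natl.
Qed.

Lemma lnh_padic (p : nat) (q : rat) : prime p ->
  ln (mx1 (ratr (padic_abs p q) : R)) = (logn p `|denq q|)%:R * ln (p%:R : R).
Proof.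
move=> pp; rewrite /padic_abs.
have [->|q0] := eqVneq q 0.
  by rewrite rmorph0 /mx1 max_l // ln1 logn1 mul0r.
have ab : (logn p `|denq q| == 0)%N || (logn p `|numq q| == 0)%N.
  have [a0|a0] := posnP (logn p `|denq q|); first by [].
  have [b0|b0] := posnP (logn p `|numq q|); first by [].
  move: a0 b0; rewrite !logn_gt0 !mem_primes => /and3P [_ _ h1] /and3P [_ _ h2].
  have := coprime_num_den q; rewrite /coprime => /eqP hg.
  have : (p %| gcdn `|numq q| `|denq q|)%N by rewrite dvdn_gcd h1 h2.
  by rewrite hg dvdn1 => /eqP p1; rewrite p1 in pp.
have p0 : (0 : rat) < p%:R by rewrite ltr0n prime_gt0.
move: ab; set a := logn p `|denq q|; set b := logn p `|numq q|.
case/orP => /eqP hab.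
  rewrite hab sub0r -exprnN.
  have h1 : (p%:R : rat) ^- b <= 1.
    by rewrite invf_le1 ?exprn_gt0 // exprn_ege1 // ler1n prime_gt0.
  rewrite /mx1 max_l ?ln1 ?mul0r //.
  by rewrite -(rmorph1 (@ratr R)) ler_rat.
rewrite hab subr0 -exprnP (rmorphXn (@ratr R)) /= (ratr_nat R p).
have h1 : (1 : R) <= p%:R ^+ a by rewrite exprn_ege1 // ler1n prime_gt0.
by rewrite /mx1 max_r // lnXn ?ltr0n ?prime_gt0 // mulr_natl.
Qed.

Lemma height_decomp (q : rat) (S : seq nat) : uniq S -> all prime S ->
  {subset primes `|denq q| <= S} ->
  height R q = ln (mx1 (ratr (arch_abs q) : R))
               + \sum_(p <- S) ln (mx1 (ratr (padic_abs p q) : R)).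
Proof.
move=> uS pS sS.
rewrite big_seq (eq_bigr (fun p => (logn p `|denq q|)%:R * ln (p%:R : R))); last first.
  by move=> p hp; rewrite lnh_padic //; move/allP: pS; apply.
rewrite -big_seq sum_logn //; last by rewrite absz_gt0 denq_eq0.
set n : R := `|numq q|%:~R.
have D0 : (0 : R) < (`|denq q|%N)%:R by rewrite ltr0n absz_gt0 denq_eq0.
have eD : (`|denq q|%:~R : R) = (`|denq q|%N)%:R by rewrite -abszE.
have ea : (ratr (arch_abs q) : R) = n / (`|denq q|%N)%:R.
  by rewrite /arch_abs ratr_norm /ratr normrM normfV -!intr_norm -eD.
rewrite /height -/n eD ea addrC -lnM ?posrE ?mx1_gt0 //.
congr (ln _); rewrite /mx1; set D := (`|denq q|%N)%:R.
have n0 : 0 <= n by rewrite /n ler0z normr_ge0.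
have [hnD|hnD] := leP n D.
  by rewrite max_l ?mulr1 // ler_pdivrMr // mul1r.
rewrite max_r; first by rewrite mulrC divfK // gt_eqF.
by rewrite ler_pdivlMr // mul1r ltW.
Qed.

End Rat.


Section RatrK.
Variables (R : realType) (absQ : rat -> rat) (K : vclosure R absQ).
Local Notation F := (vc_field K).
Local Notation N := (@vc_abs R absQ K).
Hypothesis habs : forall q, q != 0 -> absQ q != 0.

Lemma ratrK_neq0 (q : rat) : q != 0 -> (ratr q : F) != 0.
Proof.
move=> q0; rewrite -vc_abs_eq0 vc_absQ.
by rewrite fmorph_eq0 habs.
Qed.

Lemma intrK_eq0 (n : int) : ((n%:~R : F) == 0) = (n == 0).
Proof.
apply/idP/idP => [h|/eqP->]; last by rewrite mulr0z.
apply/negP => /negP n0.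
have hq : (n%:~R : rat) != 0 by rewrite intr_eq0.
by have := ratrK_neq0 hq; rewrite ratr_int h.
Qed.

Fact ratrK_zmod : zmod_morphism (@ratr F).
Proof.
have injZtoQ: @injective rat int intr by apply: intr_inj.
have nz_den x: (denq x)%:~R != 0 :> F by rewrite intrK_eq0 denq_eq0.
move=> x y.
apply: (canLR (mulfK (nz_den _))); apply: (mulIf (nz_den x)).
rewrite mulrAC mulrBl divfK ?nz_den // mulrAC -!rmorphM.
apply: (mulIf (nz_den y)); rewrite mulrAC mulrBl divfK ?nz_den //.
rewrite -!(rmorphM, rmorphB); congr _%:~R; apply: injZtoQ.
rewrite !(rmorphM, rmorphB) /= [_ - _]lock /= -lock !numqE.
by rewrite (mulrAC y) -!mulrBl -mulrA mulrAC !mulrA.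
Qed.

Fact ratrK_monoid : monoid_morphism (@ratr F).
Proof.
have injZtoQ: @injective rat int intr by apply: intr_inj.
have nz_den x: (denq x)%:~R != 0 :> F by rewrite intrK_eq0 denq_eq0.
split=> [|x y]; first by rewrite /ratr divr1.
rewrite /ratr mulrC mulrAC; apply: canLR (mulKf (nz_den _)) _; rewrite !mulrA.
do 2!apply: canRL (mulfK (nz_den _)) _; rewrite -!rmorphM; congr _%:~R.
apply: injZtoQ; rewrite !rmorphM [x * y]lock /= !numqE -lock.
by rewrite -!mulrA mulrA mulrCA -!mulrA (mulrCA y).
Qed.

Definition ratrK : {rmorphism rat -> F} :=
  HB.pack (@ratr F) (GRing.isZmodMorphism.Build rat F (@ratr F) ratrK_zmod)
    (GRing.isMonoidMorphism.Build rat F (@ratr F) ratrK_monoid).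

Lemma ratrKE (q : rat) : ratrK q = ratr q. Proof. by []. Qed.

End RatrK.


Lemma log_bounds (R : realType) (X m C c : R) (d : nat) :
  1 <= X -> 1 <= m -> 1 <= C -> 1 <= c ->
  X <= C * m ^+ d -> m ^+ d <= c ^+ d * X ->
  - (d%:R * ln c) <= ln X - d%:R * ln m <= ln C.
Proof.
move=> X1 m1 C1 c1 h1 h2.
have p1 : forall t : R, 1 <= t -> t \in Num.pos by move=> t ht; rewrite posrE; lra.
have pX : forall t : R, 1 <= t -> forall k, t ^+ k \in Num.pos.
  by move=> t ht k; rewrite posrE exprn_gt0 //; lra.
have hC : C \in Num.pos by exact: p1.
have hX : X \in Num.pos by exact: p1.
have hm : m ^+ d \in Num.pos by exact: pX.
have hc : c ^+ d \in Num.pos by exact: pX.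
have e1 : ln (C * m ^+ d) = ln C + d%:R * ln m.
  rewrite (lnM hC hm) (lnXn d (_ : 0 < m)) ?mulr_natl //; lra.
have e2 : ln (c ^+ d * X) = d%:R * ln c + ln X.
  rewrite (lnM hc hX) (lnXn d (_ : 0 < c)) ?mulr_natl //; lra.
have i1 : ln X <= ln (C * m ^+ d).
  by rewrite (ler_ln hX) // posrE mulr_gt0 // -posrE.
have i2 : ln (m ^+ d) <= ln (c ^+ d * X).
  by rewrite (ler_ln hm) // posrE mulr_gt0 // -posrE.
rewrite (lnXn d (_ : 0 < m)) in i2; last lra.
rewrite -mulr_natl in i2.
rewrite e1 in i1; rewrite e2 in i2.
apply/andP; split; lra.
Qed.

Section Psi.
Variables (R : realType) (absQ : rat -> rat) (K : vclosure R absQ).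
Local Notation F := (vc_field K).
Local Notation N := (@vc_abs R absQ K).
Variables (phi : {poly rat}) (g : F).
Hypothesis g0 : g != 0.
Hypothesis habs : forall q, q != 0 -> absQ q != 0.
Local Notation fK := (@ratrK _ _ K habs).

Lemma psi_coef i : (psi_poly phi g)`_i = g * (ratr phi`_i * g^-1 ^+ i).
Proof.
rewrite /psi_poly coefZ; congr (_ * _).
set p := map_poly ratr phi.
have -> : p \Po (g^-1 *: 'X) = \poly_(j < size p) (p`_j * g^-1 ^+ j).
  rewrite comp_polyE poly_def; apply: eq_bigr => j _.
  by rewrite exprZn scalerA.
rewrite coef_poly; case: ltnP => h.
  by rewrite /p coef_map_id0 // /ratr mul0r.
have hp : (size phi <= i)%N by move: h; rewrite /p (size_map_poly fK).
rewrite nth_default //.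
have -> : ratr (0 : rat) = 0 :> F by rewrite /ratr mul0r.
by rewrite mul0r.
Qed.

Lemma psi_size : size (psi_poly phi g) = size phi.
Proof.
rewrite /psi_poly size_scale // size_comp_poly2; first exact: (size_map_poly fK).
by rewrite size_scale ?size_polyX // invr_eq0.
Qed.

Lemma psi_horner (y : rat) : (psi_poly phi g).[g * ratr y] = g * ratr phi.[y].
Proof.
by rewrite /psi_poly hornerZ horner_comp hornerZ hornerX mulKf // (horner_map fK).
Qed.

End Psi.


Lemma mx1X (R : realType) (t : R) n : 0 <= t -> mx1 (t ^+ n) = mx1 t ^+ n.
Proof.
move=> t0; rewrite /mx1; have [h|h] := leP t 1.
  by rewrite expr1n max_l // exprn_ile1.
by rewrite max_r ?exprn_ege1 // ltW.
Qed.

Lemma mx1M (R : realType) (a b : R) : 0 <= a -> 0 <= b -> mx1 (a * b) <= mx1 a * mx1 b.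
Proof.
move=> a0 b0; rewrite [X in X <= _]/mx1 ge_max; apply/andP; split.
  by rewrite -[1 in X in X <= _]mulr1 ler_pM ?mx1_ge1.
by apply: ler_pM; rewrite ?mx1_ge.
Qed.

Lemma ln_mx1_ge0 (R : realType) (t : R) : 0 <= ln (mx1 t).
Proof. by apply: ln_ge0; apply: mx1_ge1. Qed.

Lemma ln_mx1M (R : realType) (a b : R) : 0 <= a -> 0 <= b ->
  ln (mx1 (a * b)) <= ln (mx1 a) + ln (mx1 b).
Proof.
move=> a0 b0; rewrite -lnM ?posrE ?mx1_gt0 // ler_ln ?posrE ?mx1_gt0 ?mulr_gt0 ?mx1_gt0 //.
exact: mx1M.
Qed.

Section Place.
Variables (R : realType) (absQ : rat -> rat) (K : vclosure R absQ).
Local Notation F := (vc_field K).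
Local Notation N := (@vc_abs R absQ K).
Variables (phi : {poly rat}) (g : F) (e : nat).
Hypothesis habs : forall q, q != 0 -> absQ q != 0.
Hypothesis hd : (2 <= pdeg phi)%N.
Hypothesis he : (1 <= e)%N.
Hypothesis hg : g ^+ e = ratr (lead_coef phi).
Local Notation fK := (@ratrK _ _ K habs).
Local Notation d := (pdeg phi).

Lemma phi_size : size phi = d.+1.
Proof.
rewrite /pdeg prednK // lt0n; apply/negP => /eqP h; move: hd; by rewrite /pdeg h.
Qed.

Lemma lead_neq0 : lead_coef phi != 0.
Proof. by rewrite lead_coef_eq0 -size_poly_eq0 phi_size. Qed.

Lemma g_neq0 : g != 0.
Proof.
apply/negP => /eqP g0; move: hg; rewrite g0 expr0n -(prednK he) /= => /esym/eqP.
by rewrite (negbTE (ratrK_neq0 K habs lead_neq0)).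
Qed.

Lemma psi_size' : size (psi_poly phi g) = d.+1.
Proof. by rewrite psi_size ?phi_size // g_neq0. Qed.

Lemma place_rel (y : rat) :
  ln (mx1 (ratr (absQ (lead_coef phi * y ^+ e)))) = e%:R * ln (mx1 (N (g * ratr y))).
Proof.
rewrite -(vc_absQ K) -!(ratrKE K habs) rmorphM rmorphXn !ratrKE -hg -exprMn NX mx1X ?vc_abs_ge0 //.
by rewrite lnXn ?mx1_gt0 // mulr_natl.
Qed.

Lemma place_self (y : rat) : ln (mx1 (ratr (absQ y))) = ln (mx1 (N (ratr y))).
Proof. by rewrite vc_absQ. Qed.

Lemma step_arch (y : rat) :
  - (d%:R * ln (c_arch phi g)) <=
    ln (mx1 (N (g * ratr phi.[y]))) - d%:R * ln (mx1 (N (g * ratr y)))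
  <= ln (C_arch phi g).
Proof.
rewrite -psi_horner ?g_neq0 //.
apply: log_bounds; rewrite ?mx1_ge1 ?le_max ?lexx //.
  exact: (upper_arch _ psi_size').
exact: (lower_arch _ psi_size' (leq_trans (isT : (0 < 2)%N) hd)).
Qed.

Definition delta : R := ln (mx1 (N g)) + ln (mx1 (N g)^-1).

Lemma delta_ge0 : 0 <= delta.
Proof. by rewrite addr_ge0 ?ln_mx1_ge0. Qed.

Lemma cmp_place (y : rat) :
  ln (mx1 (N (g * ratr y))) <= ln (mx1 (N (ratr y))) + delta /\
  ln (mx1 (N (ratr y))) <= ln (mx1 (N (g * ratr y))) + delta.
Proof.
have Ng0 : 0 < N g by rewrite lt_neqAle vc_abs_ge0 andbT eq_sym vc_abs_eq0 g_neq0.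
split.
  rewrite vc_absM; apply: le_trans (ln_mx1M (vc_abs_ge0 _) (vc_abs_ge0 _)) _.
  rewrite /delta; have := ln_mx1_ge0 (N g)^-1; lra.
have -> : N (ratr y) = (N g)^-1 * N (g * ratr y) by rewrite vc_absM mulKf // gt_eqF.
apply: le_trans (ln_mx1M _ (vc_abs_ge0 _)) _; first by rewrite invr_ge0 ltW.
rewrite /delta; have := ln_mx1_ge0 (N g); lra.
Qed.

Hypothesis hQ : forall n : nat, absQ n%:R <= 1.

Lemma step_nonarch (y : rat) :
  - (d%:R * ln (c_nonarch phi g)) <=
    ln (mx1 (N (g * ratr phi.[y]))) - d%:R * ln (mx1 (N (g * ratr y)))
  <= ln (C_nonarch phi g).
Proof.
rewrite -psi_horner ?g_neq0 //.
apply: log_bounds; rewrite ?mx1_ge1 ?le_max ?lexx //.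
  exact: (upper_nonarch hQ _ psi_size').
exact: (lower_nonarch hQ _ psi_size' (leq_trans (isT : (0 < 2)%N) hd)).
Qed.

Hypothesis hgood1 : forall i, absQ phi`_i <= 1.
Hypothesis hgood2 : absQ (lead_coef phi) = 1.

Lemma Ng1 : N g = 1.
Proof.
apply/eqP; rewrite -(@pexpr_eq1 _ _ e) ?vc_abs_ge0 // -NX hg vc_absQ hgood2.
by rewrite (rmorph1 (@ratr R)).
Qed.

Lemma step_good (y : rat) :
  ln (mx1 (N (g * ratr phi.[y]))) = d%:R * ln (mx1 (N (g * ratr y))).
Proof.
rewrite -psi_horner ?g_neq0 // (good_eq hQ _ psi_size' (leq_trans (isT : (0 < 2)%N) hd)).
- by rewrite lnXn ?mx1_gt0 // mulr_natl.
- move=> i; rewrite psi_coef ?g_neq0 // vc_absM (vc_absM (ratr _)) NX NV ?g_neq0 // Ng1 invr1 expr1n mulr1 mul1r.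
  by rewrite vc_absQ -(rmorph1 (@ratr R)) ler_rat.
- rewrite psi_coef ?g_neq0 // vc_absM (vc_absM (ratr _)) NX NV ?g_neq0 // Ng1 invr1 expr1n mulr1 mul1r.
  have -> : phi`_d = lead_coef phi by rewrite lead_coefE phi_size.
  by rewrite vc_absQ hgood2 (rmorph1 (@ratr R)).
Qed.

Lemma delta_good : delta = 0.
Proof. by rewrite /delta Ng1 invr1 /mx1 maxxx ln1 addr0. Qed.

End Place.


Lemma pad_le1 (p : nat) (c : rat) : prime p -> ~~ (p %| `|denq c|)%N -> padic_abs p c <= 1.
Proof.
move=> pp hd; rewrite /padic_abs; case: eqP => // _.
have -> : logn p `|denq c| = 0%N.
  apply/eqP; rewrite -leqn0 leqNgt logn_gt0 mem_primes; by rewrite (negbTE hd) !andbF.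
have p0 : (0 : rat) < p%:R by rewrite ltr0n prime_gt0.
rewrite sub0r -exprnN.
by rewrite invf_le1 ?exprn_gt0 // exprn_ege1 // ler1n prime_gt0.
Qed.

Lemma pad_nat (p : nat) (n : nat) : prime p -> padic_abs p n%:R <= 1.
Proof.
move=> pp; apply: pad_le1 => //.
have -> : (n%:R : rat) = (n%:Z)%:~R by [].
rewrite denq_int /= dvdn1; apply/negP => /eqP p1; by rewrite p1 in pp.
Qed.

Lemma pad_neq0 (p : nat) (q : rat) : prime p -> q != 0 -> padic_abs p q != 0.
Proof.
move=> pp q0; rewrite /padic_abs (negbTE q0) expfz_neq0 //.
by rewrite pnatr_eq0 -lt0n prime_gt0.
Qed.

Lemma arch_neq0 (q : rat) : q != 0 -> arch_abs q != 0.
Proof. by rewrite /arch_abs normr_eq0. Qed.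

Lemma bad_bound_gt0 (phi : {poly rat}) : phi != 0 -> (0 < bad_bound phi)%N.
Proof.
move=> phi0; rewrite /bad_bound muln_gt0 absz_gt0 numq_eq0 lead_coef_eq0 phi0 andbT.
by rewrite prodn_gt0 // => i; rewrite absz_gt0 denq_eq0.
Qed.

Lemma bad_in (phi : {poly rat}) (p : nat) : phi != 0 -> prime p -> bad_at p phi ->
  p \in primes (bad_bound phi).
Proof.
move=> phi0 pp; apply: contraLR => hp.
have hnd : ~~ (p %| bad_bound phi)%N by rewrite mem_primes pp bad_bound_gt0 // in hp.
have hden : forall i : 'I_(size phi), ~~ (p %| `|denq phi`_i|)%N.
  move=> i; apply: contra hnd => h; apply: dvdn_trans h _.
  by rewrite /bad_bound (bigD1 i) //= -mulnA dvdn_mulr.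
have hs : (0 < size phi)%N by rewrite size_poly_gt0.
rewrite /bad_at negbK; apply/andP; split.
  apply/(all_nthP 0) => i hi; exact: (pad_le1 pp (hden (Ordinal hi))).
have hl : ~~ (p %| `|denq (lead_coef phi)|)%N.
  by rewrite lead_coefE; apply: (hden (Ordinal (_ : (size phi).-1 < size phi)%N)); rewrite prednK.
have hn : ~~ (p %| `|numq (lead_coef phi)|)%N.
  apply: contra hnd => h; apply: dvdn_trans h _; exact: dvdn_mull.
rewrite /padic_abs lead_coef_eq0 (negbTE phi0).
have -> : logn p `|denq (lead_coef phi)| = 0%N.
  apply/eqP; rewrite -leqn0 leqNgt logn_gt0 mem_primes; by rewrite (negbTE hl) !andbF.
have -> : logn p `|numq (lead_coef phi)| = 0%N.
  apply/eqP; rewrite -leqn0 leqNgt logn_gt0 mem_primes; by rewrite (negbTE hn) !andbF.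
by rewrite subrr expr0z.
Qed.

Lemma good_coef (phi : {poly rat}) (p : nat) : ~~ bad_at p phi ->
  forall i, padic_abs p phi`_i <= 1.
Proof.
rewrite /bad_at negbK => /andP [/(all_nthP 0) ha _] i.
case: (ltnP i (size phi)) => hi; first exact: ha.
by rewrite nth_default // /padic_abs eqxx.
Qed.

Lemma good_lead (phi : {poly rat}) (p : nat) : ~~ bad_at p phi ->
  padic_abs p (lead_coef phi) = 1.
Proof. by rewrite /bad_at negbK => /andP [_ /eqP]. Qed.


Section Global.
Variables (R : realType) (phi : {poly rat}) (e : nat)
  (Kinf : vclosure R arch_abs) (Kp : forall p : nat, vclosure R (padic_abs p))
  (ginf : vc_field Kinf) (gp : forall p : nat, vc_field (Kp p)).
Hypothesis hd : (2 <= pdeg phi)%N.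
Hypothesis he : (1 <= e)%N.
Hypothesis hginf : ginf ^+ e = ratr (lead_coef phi).
Hypothesis hgp : forall p : nat, gp p ^+ e = ratr (lead_coef phi).

Local Notation a := (lead_coef phi).
Local Notation d := (pdeg phi).

Definition Ai (y : rat) : R := ln (mx1 (vc_abs (ginf * ratr y))).
Definition Ap (p : nat) (y : rat) : R := ln (mx1 (vc_abs (gp p * ratr y))).
Definition Bi (y : rat) : R := ln (mx1 (vc_abs (ratr y : vc_field Kinf))).
Definition Bp (p : nat) (y : rat) : R := ln (mx1 (vc_abs (ratr y : vc_field (Kp p)))).

Definition Sfor (qs : seq rat) : seq nat :=
  bad_primes phi ++ [seq p <- undup (flatten [seq primes `|denq q| | q <- qs]) | ~~ bad_at p phi].

Lemma phi_neq0 : phi != 0.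
Proof. by rewrite -size_poly_eq0 (phi_size hd). Qed.

Lemma bad_primes_prime p : p \in bad_primes phi -> prime p.
Proof. by rewrite mem_filter mem_primes => /andP [_ /andP []]. Qed.

Lemma bad_primes_bad p : p \in bad_primes phi -> bad_at p phi.
Proof. by rewrite mem_filter => /andP []. Qed.

Lemma Sfor_uniq qs : uniq (Sfor qs).
Proof.
rewrite cat_uniq filter_uniq ?undup_uniq ?primes_uniq //= ?andbT.
rewrite filter_uniq ?undup_uniq // andbT.
apply/hasPn => p; rewrite mem_filter => /andP [hb _]; apply/negP => /bad_primes_bad.
by rewrite (negbTE hb).
Qed.

Lemma Sfor_prime qs : all prime (Sfor qs).
Proof.
apply/allP => p; rewrite mem_cat => /orP [/bad_primes_prime //|].
rewrite mem_filter mem_undup => /andP [_ /flattenP [s /mapP [q _ ->]]].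
by rewrite mem_primes => /andP [].
Qed.

Lemma Sfor_sub qs q : q \in qs -> {subset primes `|denq q| <= Sfor qs}.
Proof.
move=> hq p hp; rewrite mem_cat.
have pp : prime p by move: hp; rewrite mem_primes => /andP [].
case hb: (bad_at p phi).
  by rewrite mem_filter hb bad_in ?phi_neq0.
apply/orP; right; rewrite mem_filter hb mem_undup /=.
by apply/flattenP; exists (primes `|denq q|) => //; apply/mapP; exists q.
Qed.

Lemma e_neq0 : (e%:R : R) != 0.
Proof. by rewrite pnatr_eq0 -lt0n. Qed.

Lemma decomp_e (y : rat) (S : seq nat) : uniq S -> all prime S ->
  {subset primes `|denq (a * y ^+ e)| <= S} ->
  height R (a * y ^+ e) / e%:R = Ai y + \sum_(p <- S) Ap p y.
Proof.
move=> uS pS sS; rewrite (height_decomp R uS pS sS).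
rewrite (place_rel (@arch_neq0) hginf).
rewrite big_seq (eq_bigr (fun p => e%:R * Ap p y)); last first.
  move=> p hp; have pp : prime p by move/allP: pS; apply.
  exact: (place_rel (fun q => @pad_neq0 p q pp) (hgp p)).
by rewrite -big_seq -mulr_sumr -mulrDr mulrC mulKf ?e_neq0.
Qed.

Lemma decomp_1 (y : rat) (S : seq nat) : uniq S -> all prime S ->
  {subset primes `|denq y| <= S} ->
  height R y = Bi y + \sum_(p <- S) Bp p y.
Proof.
move=> uS pS sS; rewrite (height_decomp R uS pS sS) (place_self Kinf).
by congr (_ + _); apply: eq_bigr => p _; rewrite (place_self (Kp p)).
Qed.

Definition Lc : R := ln (c_arch phi ginf) + \sum_(p <- bad_primes phi) ln (c_nonarch phi (gp p)).
Definition LC : R := ln (C_arch phi ginf) + \sum_(p <- bad_primes phi) ln (C_nonarch phi (gp p)).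
Definition Dl : R := delta ginf + \sum_(p <- bad_primes phi) delta (gp p).

Definition sh (y : rat) : R := height R (a * y ^+ e) / e%:R.

Lemma split_sum (S T : seq nat) (f : nat -> R) :
  (forall p, p \in T -> f p = 0) -> \sum_(p <- S ++ T) f p = \sum_(p <- S) f p.
Proof.
move=> h; rewrite big_cat /= (@big1_seq _ _ _ _ T) ?addr0 // => p /andP [_ hp]; exact: h.
Qed.

Lemma T_good qs p : p \in [seq p <- undup (flatten [seq primes `|denq q| | q <- qs]) | ~~ bad_at p phi] ->
  prime p /\ ~~ bad_at p phi.
Proof.
rewrite mem_filter mem_undup => /andP [hb /flattenP [s /mapP [q _ ->]]].
by rewrite mem_primes => /andP [].
Qed.

Lemma step_global (y : rat) :
  - (d%:R * Lc) <= sh phi.[y] - d%:R * sh y <= LC.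
Proof.
set qs := [:: a * y ^+ e; a * phi.[y] ^+ e].
have s1 := Sfor_sub (mem_head (a * y ^+ e) [:: a * phi.[y] ^+ e]).
have s2 : {subset primes `|denq (a * phi.[y] ^+ e)| <= Sfor qs}.
  by apply: Sfor_sub; rewrite !inE eqxx orbT.
rewrite /sh (decomp_e (Sfor_uniq _) (Sfor_prime _) s1) (decomp_e (Sfor_uniq _) (Sfor_prime _) s2).
set f := fun p => Ap p phi.[y] - d%:R * Ap p y.
have -> : Ai phi.[y] + \sum_(p <- Sfor qs) Ap p phi.[y] - d%:R * (Ai y + \sum_(p <- Sfor qs) Ap p y)
   = (Ai phi.[y] - d%:R * Ai y) + \sum_(p <- Sfor qs) f p.
  by rewrite /f sumrB -mulr_sumr; lra.
rewrite /Sfor split_sum; last first.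
  move=> p /T_good [pp hb]; rewrite /f /Ap.
  rewrite (step_good (fun q => @pad_neq0 p q pp) hd he (hgp p) (fun n => @pad_nat p n pp) (good_coef hb) (good_lead hb)).
  by rewrite subrr.
have ha := step_arch (@arch_neq0) hd he hginf y.
have hb : forall p, p \in bad_primes phi ->
   - (d%:R * ln (c_nonarch phi (gp p))) <= f p <= ln (C_nonarch phi (gp p)).
  move=> p hp; have pp := bad_primes_prime hp.
  exact: (step_nonarch (fun q => @pad_neq0 p q pp) hd he (hgp p) (fun n => @pad_nat p n pp) y).
have hb1 : \sum_(p <- bad_primes phi) - (d%:R * ln (c_nonarch phi (gp p))) <= \sum_(p <- bad_primes phi) f p.
  by rewrite big_seq [X in _ <= X]big_seq; apply: ler_sum => p hp; case/andP: (hb p hp).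
have hb2 : \sum_(p <- bad_primes phi) f p <= \sum_(p <- bad_primes phi) ln (C_nonarch phi (gp p)).
  by rewrite big_seq [X in _ <= X]big_seq; apply: ler_sum => p hp; case/andP: (hb p hp).
rewrite sumrN -mulr_sumr in hb1.
rewrite /Lc /LC /Ai mulrDr; case/andP: ha => ha1 ha2; apply/andP; split; lra.
Qed.

Lemma cmp_global (y : rat) : - Dl <= height R y - sh y <= Dl.
Proof.
set qs := [:: y; a * y ^+ e].
have s1 : {subset primes `|denq y| <= Sfor qs} by apply: Sfor_sub; rewrite mem_head.
have s2 : {subset primes `|denq (a * y ^+ e)| <= Sfor qs}.
  by apply: Sfor_sub; rewrite !inE eqxx orbT.
rewrite /sh (decomp_e (Sfor_uniq _) (Sfor_prime _) s2) (decomp_1 (Sfor_uniq _) (Sfor_prime _) s1).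
set f := fun p => Bp p y - Ap p y.
have -> : Bi y + \sum_(p <- Sfor qs) Bp p y - (Ai y + \sum_(p <- Sfor qs) Ap p y)
   = (Bi y - Ai y) + \sum_(p <- Sfor qs) f p.
  by rewrite /f sumrB; lra.
have gd : forall p, p \in [seq p <- undup (flatten [seq primes `|denq q| | q <- qs]) | ~~ bad_at p phi] ->
   delta (gp p) = 0.
  move=> p /T_good [pp hb]; exact: (delta_good he (hgp p) (good_lead hb)).
have hT : forall p, p \in Sfor qs -> - delta (gp p) <= f p <= delta (gp p).
  move=> p hp; have pp : prime p by move/allP: (Sfor_prime qs); apply.
  have [h1 h2] := cmp_place (fun q => @pad_neq0 p q pp) hd he (hgp p) y.
  rewrite /f /Ap /Bp; apply/andP; split; lra.
have hb1 : \sum_(p <- Sfor qs) - delta (gp p) <= \sum_(p <- Sfor qs) f p.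
  by rewrite big_seq [X in _ <= X]big_seq; apply: ler_sum => p hp; case/andP: (hT p hp).
have hb2 : \sum_(p <- Sfor qs) f p <= \sum_(p <- Sfor qs) delta (gp p).
  by rewrite big_seq [X in _ <= X]big_seq; apply: ler_sum => p hp; case/andP: (hT p hp).
have e1 : \sum_(p <- Sfor qs) delta (gp p) = \sum_(p <- bad_primes phi) delta (gp p).
  by rewrite /Sfor split_sum.
rewrite sumrN e1 in hb1; rewrite e1 in hb2.
have [h1 h2] := cmp_place (@arch_neq0) hd he hginf y.
rewrite /Dl /Ai /Bi in h1 h2 *; apply/andP; split; lra.
Qed.


Lemma ln_max1_ge0 (t : R) : 0 <= ln (Num.max 1 t).
Proof. exact: (ln_mx1_ge0 t). Qed.

Lemma Lc_ge0 : 0 <= Lc.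
Proof. by rewrite /Lc addr_ge0 ?ln_max1_ge0 // sumr_ge0 // => p _; apply: ln_max1_ge0. Qed.

Lemma LC_ge0 : 0 <= LC.
Proof. by rewrite /LC addr_ge0 ?ln_max1_ge0 // sumr_ge0 // => p _; apply: ln_max1_ge0. Qed.

Lemma height_ge0 (q : rat) : 0 <= height R q.
Proof.
rewrite /height; apply: ln_ge0; rewrite le_max; apply/orP; right.
have h : (1 : int) <= `|denq q| by rewrite gtr0_norm ?denq_gt0 // -gtz0_ge1 denq_gt0.
by rewrite -(mulr1z (1 : R)) ler_int.
Qed.

Lemma sh_ge0 y : 0 <= sh y.
Proof. by rewrite /sh divr_ge0 ?height_ge0 ?ler0n. Qed.

Variable x : rat.
Let yk k := iter k (fun y => phi.[y]) x.
Let D : R := d%:R.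
Let tk k : R := (D ^+ k)^-1.
Let sk k : R := sh (yk k) * tk k.

Lemma D_gt1 : 1 < D.
Proof. by rewrite /D ltr1n. Qed.

Lemma tk_S k : tk k.+1 = tk k / D.
Proof. by rewrite /tk exprSr invfM. Qed.

Lemma tk_gt0 k : 0 < tk k.
Proof. by rewrite /tk invr_gt0 exprn_gt0 // (lt_trans ltr01 D_gt1). Qed.

Lemma s_step k : - (Lc * tk k) <= sk k.+1 - sk k <= LC * (tk k / D).
Proof.
have D0 : D != 0 by rewrite gt_eqF // (lt_trans ltr01 D_gt1).
have e1 : sk k.+1 - sk k = (sh phi.[yk k] - D * sh (yk k)) * (tk k / D).
  rewrite /sk tk_S /yk iterS; field; by rewrite ?D0.
have := step_global (yk k); rewrite -/D => /andP [h1 h2].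
have t0 : 0 < tk k / D by rewrite divr_gt0 ?tk_gt0 // (lt_trans ltr01 D_gt1).
rewrite e1; apply/andP; split.
  have := ler_wpM2r (ltW t0) h1; rewrite mulNr => h.
  apply: le_trans h; have -> : D * Lc * (tk k / D) = Lc * tk k by field.
  by [].
by have := ler_wpM2r (ltW t0) h2.
Qed.

Lemma tk_cvg : (tk @ \oo --> (0 : R))%classic.
Proof.
have -> : tk = (fun k => D^-1 ^+ k) by apply/funext => k; rewrite /tk exprVn.
apply: cvg_expr; rewrite ger0_norm ?invr_ge0 ?(ltW (lt_trans ltr01 D_gt1)) //.
by rewrite invf_lt1 ?D_gt1 // (lt_trans ltr01 D_gt1).
Qed.

Let cU : R := 1 / (D - 1) * LC.
Let cL : R := D / (D - 1) * Lc.
Let uk k := sk k + tk k * cU.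
Let vk k := sk k - tk k * cL.

Lemma uk_noninc : {homo uk : n m / (n <= m)%N >-> m <= n}.
Proof.
apply/nonincreasing_seqP => k; rewrite /uk.
have D0 : D != 0 by rewrite gt_eqF // (lt_trans ltr01 D_gt1).
have D1 : D - 1 != 0 by rewrite subr_eq0 gt_eqF // D_gt1.
have ee : tk k.+1 * cU - tk k * cU = - (LC * (tk k / D)).
  rewrite tk_S /cU; field; by rewrite D0 D1.
have := s_step k => /andP [_ h]; lra.
Qed.

Lemma vk_nondec : {homo vk : n m / (n <= m)%N >-> n <= m}.
Proof.
apply/nondecreasing_seqP => k; rewrite /vk.
have D0 : D != 0 by rewrite gt_eqF // (lt_trans ltr01 D_gt1).
have D1 : D - 1 != 0 by rewrite subr_eq0 gt_eqF // D_gt1.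
have ee : tk k.+1 * cL - tk k * cL = - (Lc * tk k).
  rewrite tk_S /cL; field; by rewrite D0 D1.
have := s_step k => /andP [h _]; lra.
Qed.


Lemma cU_ge0 : 0 <= cU.
Proof.
rewrite /cU mulr_ge0 ?LC_ge0 // divr_ge0 // subr_ge0; exact: (ltW D_gt1).
Qed.

Lemma final (n : nat) :
    - ((D ^+ n)^-1 * ctilde phi ginf gp)
      <= canonical_height R phi x - height R (a * yk n ^+ e) / (e%:R * D ^+ n)
    /\
    canonical_height R phi x - height R (a * yk n ^+ e) / (e%:R * D ^+ n)
      <= (D ^+ n)^-1 * Ctilde phi ginf gp.
Proof.
have hsk : forall k, height R (a * yk k ^+ e) / (e%:R * D ^+ k) = sk k.
  by move=> k; rewrite /sk /sh /tk invfM mulrA.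
have hct : ctilde phi ginf gp = cL by [].
have hCt : Ctilde phi ginf gp = cU by [].
rewrite hsk hct hCt -/(tk n).
have hu0 : forall k, 0 <= uk k.
  move=> k; exact: (addr_ge0 (mulr_ge0 (sh_ge0 _) (ltW (tk_gt0 k))) (mulr_ge0 (ltW (tk_gt0 k)) cU_ge0)).
have hu : (uk @ \oo --> inf (range uk))%classic.
  apply: nonincreasing_cvgn; first exact: uk_noninc.
  exists 0 => r [j _ <-]; exact: hu0.
set L := inf (range uk) in hu.
have htc : ((fun k => tk k * cU) @ \oo --> 0)%classic.
  by rewrite -(mul0r cU); apply: cvgMl; exact: tk_cvg.
have hs : (sk @ \oo --> L)%classic.
  have -> : sk = (fun k => uk k - tk k * cU) by apply/funext => k; rewrite /uk addrK.
  by rewrite -[L]subr0; apply: cvgB.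
have htl : ((fun k => tk k * cL) @ \oo --> 0)%classic.
  by rewrite -(mul0r cL); apply: cvgMl; exact: tk_cvg.
have hv : (vk @ \oo --> L)%classic.
  by rewrite -[L]subr0; apply: cvgB.
have htd : ((fun k => tk k * Dl) @ \oo --> 0)%classic.
  by rewrite -(mul0r Dl); apply: cvgMl; exact: tk_cvg.
have hh : ((fun k => height R (yk k) / (D ^+ k)) @ \oo --> L)%classic.
  apply: (@squeeze_cvgr _ _ _ _ (fun k => sk k - tk k * Dl) (fun k => sk k + tk k * Dl)).
  - apply: nearW => k; have := cmp_global (yk k) => /andP [h1 h2].
    have t0 := tk_gt0 k.
    rewrite -/(tk k) /sk; apply/andP; split; nra.
  - by rewrite -[L]subr0; apply: cvgB.
  - by rewrite -[L]addr0; apply: cvgD.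
have hL : canonical_height R phi x = L by apply: (cvg_lim (@Rhausdorff R)).
have hvL : limn vk = L by apply: (cvg_lim (@Rhausdorff R)).
have huL : limn uk = L by apply: (cvg_lim (@Rhausdorff R)).
have hv1 := nondecreasing_cvgn_le vk_nondec (cvgP _ hv) n.
have hu1 := nonincreasing_cvgn_ge uk_noninc (cvgP _ hu) n.
rewrite hvL /vk in hv1; rewrite huL /uk in hu1.
rewrite hL; split; lra.
Qed.

End Global.


Theorem theorem2p7 (R : realType) (phi : {poly rat}) (e : nat)
  (Kinf : vclosure R arch_abs) (Kp : forall p : nat, vclosure R (padic_abs p))
  (ginf : vc_field Kinf) (gp : forall p : nat, vc_field (Kp p)) :
  (2 <= pdeg phi)%N -> (1 <= e)%N ->
  ginf ^+ e = ratr (lead_coef phi) ->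
  (forall p : nat, gp p ^+ e = ratr (lead_coef phi)) ->
  forall (x : rat) (n : nat),
    - (((pdeg phi)%:R ^+ n)^-1 * ctilde phi ginf gp)
      <= canonical_height R phi x
         - height R (lead_coef phi * (iter n (fun y => phi.[y]) x) ^+ e)
           / (e%:R * (pdeg phi)%:R ^+ n)
    /\
    canonical_height R phi x
         - height R (lead_coef phi * (iter n (fun y => phi.[y]) x) ^+ e)
           / (e%:R * (pdeg phi)%:R ^+ n)
      <= ((pdeg phi)%:R ^+ n)^-1 * Ctilde phi ginf gp.
Proof.
move=> hd he hginf hgp x n.
exact: (final hd he hginf hgp x n).
Qed.
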